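(* Let $\mathcal{H}$ be a finite-dimensional complex Hilbert space, let $\ket{\psi_1},\ket{\psi_2}\in\mathcal{H}$ be pure states, let $\rho=\tfrac12(\ket{\psi_1}\!\bra{\psi_1}+\ket{\psi_2}\!\bra{\psi_2})$, and let $\alpha,\beta\in[0,1]$. Then for every ontological model (as defined in the context) for these preparations, $$\omega_Q(\psi_1,\psi_2;\alpha,\beta)-\omega_{\Lambda}(\psi_1,\psi_2;\alpha,\beta)\geq B_Q(\psi_1,\psi_2,\rho;\alpha,\beta),$$ where $$B_Q(\psi_1,\psi_2,\rho;\alpha,\beta)=2\Big((1-\alpha)D_Q(\psi_1,\psi_2)+D_Q\big(\{\psi_1,\tfrac{1+\beta}{2}\},\{\rho,\alpha+\beta\}\big)+D_Q\big(\{\psi_2,\tfrac{1+\beta}{2}\},\{\rho,\alpha+\beta\}\big)-S^{Gam}_Q(\psi_1,\psi_2;\alpha,\beta)-2\beta-1\Big).$$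
   Context: Probabilities: for a (pure or mixed) state $\sigma$ and a POVM $\mathcal{M}=\{M_k\}_k$, $p(k|\sigma,\mathcal{M})=\mathrm{Tr}(\sigma M_k)$. Weighted distinguishability: for states $\phi_1,\phi_2$ and weights $w_1,w_2\ge 0$, $D_Q(\{\phi_1,w_1\},\{\phi_2,w_2\})=\max_{\mathcal{M}}\big(w_1p(1|\phi_1,\mathcal{M})+w_2p(2|\phi_2,\mathcal{M})\big)$, the maximum over all two-outcome POVMs $\mathcal{M}=\{M_1,M_2\}$. Write $D_Q(\psi_1,\psi_2)=D_Q(\{\psi_1,\tfrac12\},\{\psi_2,\tfrac12\})$. Quantum gambling value: $S^{Gam}_Q(\psi_1,\psi_2;\alpha,\beta)=\tfrac12\max_{\mathcal{M}}\big(p(1|\psi_1,\mathcal{M})-\beta p(2|\psi_1,\mathcal{M})+\alpha p(3|\psi_1,\mathcal{M})+p(2|\psi_2,\mathcal{M})-\beta p(1|\psi_2,\mathcal{M})+\alpha p(3|\psi_2,\mathcal{M})\big)$, maximum over all three-outcome POVMs $\mathcal{M}=\{M_1,M_2,M_3\}$. The generalized quantum overlap is $\omega_Q(\psi_1,\psi_2;\alpha,\beta)=2\big(1-S^{Gam}_Q(\psi_1,\psi_2;\alpha,\beta)\big)$. Ontological model: a measure space $(\Lambda,d\lambda)$ (ontic state space); to each preparation $\sigma\in\{\psi_1,\psi_2,\rho\}$ a probability density $\mu(\lambda|\sigma)\ge0$, $\int_\Lambda\mu(\lambda|\sigma)d\lambda=1$ (epistemic state); to each $n$-outcome POVM $\mathcal{M}=\{M_k\}$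 response functions $\xi(k|\lambda,\mathcal{M})\ge0$ with $\sum_k\xi(k|\lambda,\mathcal{M})=1$ for all $\lambda$; such that $\mathrm{Tr}(\sigma M_k)=\int_\Lambda\mu(\lambda|\sigma)\xi(k|\lambda,\mathcal{M})d\lambda$ for all such $\sigma,\mathcal{M},k$. Moreover the epistemic state of the mixture respects its convex decomposition: $\mu(\lambda|\rho)=\tfrac12(\mu(\lambda|\psi_1)+\mu(\lambda|\psi_2))$ for all $\lambda$. Generalized epistemic overlap: with $\tilde\mu_1=(1+\beta)\mu(\cdot|\psi_1)$, $\tilde\mu_2=(1+\beta)\mu(\cdot|\psi_2)$, $\tilde\mu_3=(\alpha+\beta)(\mu(\cdot|\psi_1)+\mu(\cdot|\psi_2))$, $\omega_\Lambda(\psi_1,\psi_2;\alpha,\beta)=\int_\Lambda\min(\tilde\mu_1,\tilde\mu_2)d\lambda+\int_\Lambda\min(\tilde\mu_1,\tilde\mu_3)d\lambda+\int_\Lambda\min(\tilde\mu_2,\tilde\mu_3)d\lambda-2(\alpha+\beta)-\int_\Lambda\min(\tilde\mu_1,\tilde\mu_2,\tilde\mu_3)d\lambda$. *)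

(* Defs.v *)
From HB Require Import structures.
From mathcomp Require Import all_boot all_order all_algebra.
From mathcomp Require Import complex.
From mathcomp Require Import all_classical all_reals all_analysis.

Set Implicit Arguments.
Unset Strict Implicit.
Unset Printing Implicit Defensive.
Import Order.TTheory GRing.Theory Num.Theory.
Local Open Scope ring_scope.
Local Open Scope classical_set_scope.

Section Quantum.
Variable R : realType.
Local Notation C := (R[i]).

Definition adj m k (A : 'M[C]_(m, k)) : 'M[C]_(k, m) := (map_mx Num.conj A)^T.

Variable n : nat. (* dimension of the Hilbert space H = C^n *)

Definition unit_vector (psi : 'cV[C]_n) : Prop := adj psi *m psi = 1%:M.

Definition proj (psi : 'cV[C]_n) : 'M[C]_n := psi *m adj psi.

Definition mixture (psi1 psi2 : 'cV[C]_n) : 'M[C]_n :=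
  (2%:R^-1 : C) *: (proj psi1 + proj psi2).

Definition psd (A : 'M[C]_n) : Prop := forall v : 'cV[C]_n, 0 <= (adj v *m A *m v) 0 0.

Definition is_POVM k (M : 'I_k -> 'M[C]_n) : Prop :=
  (forall i, psd (M i)) /\ \sum_(i < k) M i = 1%:M.

Definition prob k (sigma : 'M[C]_n) (M : 'I_k -> 'M[C]_n) (i : 'I_k) : R :=
  complex.Re (\tr (sigma *m M i)).

Definition o2_1 : 'I_2 := inord 0.
Definition o2_2 : 'I_2 := inord 1.
Definition o3_1 : 'I_3 := inord 0.
Definition o3_2 : 'I_3 := inord 1.
Definition o3_3 : 'I_3 := inord 2.

(* weighted distinguishability D_Q({phi1,w1},{phi2,w2}); the max over POVMs
   is written as a supremum (it is attained) *)
Definition DQw (phi1 : 'M[C]_n) (w1 : R) (phi2 : 'M[C]_n) (w2 : R) : R :=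
  sup [set x : R | exists M : 'I_2 -> 'M[C]_n,
        is_POVM M /\ x = w1 * prob phi1 M o2_1 + w2 * prob phi2 M o2_2].

Definition DQ (psi1 psi2 : 'cV[C]_n) : R :=
  DQw (proj psi1) (2%:R^-1) (proj psi2) (2%:R^-1).

Definition SGam (psi1 psi2 : 'cV[C]_n) (a b : R) : R :=
  2%:R^-1 * sup [set x : R | exists M : 'I_3 -> 'M[C]_n, is_POVM M /\
     x = prob (proj psi1) M o3_1 - b * prob (proj psi1) M o3_2
         + a * prob (proj psi1) M o3_3
         + prob (proj psi2) M o3_2 - b * prob (proj psi2) M o3_1
         + a * prob (proj psi2) M o3_3].

Definition omegaQ (psi1 psi2 : 'cV[C]_n) (a b : R) : R :=
  2 * (1 - SGam psi1 psi2 a b).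

Definition BQ (psi1 psi2 : 'cV[C]_n) (a b : R) : R :=
  let rho := mixture psi1 psi2 in
  2 * ((1 - a) * DQ psi1 psi2
       + DQw (proj psi1) ((1 + b) / 2) rho (a + b)
       + DQw (proj psi2) ((1 + b) / 2) rho (a + b)
       - SGam psi1 psi2 a b - 2 * b - 1).

Section Model.
Context (d : measure_display) (T : measurableType d)
        (mu : {measure set T -> \bar R}).

(* epistemic state: probability density w.r.t. mu *)
Definition is_density (f : T -> R) : Prop :=
  measurable_fun setT f /\ (forall l, 0 <= f l) /\
  (\int[mu]_x (f x)%:E = 1)%E.

(* ontological model for the preparations psi1, psi2, rho with epistemic
   states m1, m2, mr and response functions xi k M i l = xi(i | l, M) *)
Definition is_ontological_model (psi1 psi2 : 'cV[C]_n)
  (m1 m2 mr : T -> R)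
  (xi : forall k, ('I_k -> 'M[C]_n) -> 'I_k -> T -> R) : Prop :=
  [/\ [/\ is_density m1, is_density m2 & is_density mr],
      (forall k (M : 'I_k -> 'M[C]_n), is_POVM M ->
         (forall i, measurable_fun setT (xi k M i)) /\
         (forall i l, 0 <= xi k M i l) /\
         (forall l, (\sum_(i < k) xi k M i l)%R = 1)),
      (forall k (M : 'I_k -> 'M[C]_n), is_POVM M -> forall i,
         [/\ ((prob (proj psi1) M i)%:E = \int[mu]_x (m1 x * xi k M i x)%:E)%E,
             ((prob (proj psi2) M i)%:E = \int[mu]_x (m2 x * xi k M i x)%:E)%E &
             ((prob (mixture psi1 psi2) M i)%:E
                = \int[mu]_x (mr x * xi k M i x)%:E)%E])
    & (forall l, mr l = 2%:R^-1 * (m1 l + m2 l))].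

Definition omegaL (m1 m2 : T -> R) (a b : R) : \bar R :=
  let t1 x := (1 + b) * m1 x in
  let t2 x := (1 + b) * m2 x in
  let t3 x := (a + b) * (m1 x + m2 x) in
  (\int[mu]_x (Order.min (t1 x) (t2 x))%:E
   + \int[mu]_x (Order.min (t1 x) (t3 x))%:E
   + \int[mu]_x (Order.min (t2 x) (t3 x))%:E
   - (2 * (a + b))%:E
   - \int[mu]_x (Order.min (Order.min (t1 x) (t2 x)) (t3 x))%:E)%E.

End Model.
End Quantum.

(* Main.v *)
Require Import Defs.
From HB Require Import structures.
From mathcomp Require Import all_boot all_order all_algebra.
From mathcomp Require Import complex.
From mathcomp Require Import all_classical all_reals all_analysis.
From mathcomp Require Import measurable_realfun lra.
Import Order.TTheory GRing.Theory Num.Theory.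
Local Open Scope ring_scope.

Section Helpers.
Context (R : realType) (d : measure_display) (T : measurableType d)
        (mu : {measure set T -> \bar R}).

Definition mf (f : T -> R) := measurable_fun setT f.

Lemma mfM (f g : T -> R) : mf f -> mf g -> mf (fun x => f x * g x).
Proof. exact: measurable_funM. Qed.

Lemma mfD (f g : T -> R) : mf f -> mf g -> mf (fun x => f x + g x).
Proof. exact: measurable_funD. Qed.

Lemma mfC (c : R) : mf (fun _ => c).
Proof. exact: measurable_cst. Qed.

Lemma mfmin (f g : T -> R) : mf f -> mf g -> mf (fun x => Order.min (f x) (g x)).
Proof. exact: measurable_minr. Qed.

Lemma mfE (f : T -> R) : mf f ->
  measurable_fun setT (fun x => (f x)%:E).
Proof. by move=> h; apply/measurable_EFinP. Qed.

Lemma int_lin (f1 f2 g : T -> R) (c1 c2 : R) :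
  mf f1 -> mf f2 -> mf g ->
  (forall x, 0 <= f1 x) -> (forall x, 0 <= f2 x) -> (forall x, 0 <= g x) ->
  0 <= c1 -> 0 <= c2 -> (forall x, g x <= c1 * f1 x + c2 * f2 x) ->
  (\int[mu]_x (g x)%:E <=
     c1%:E * \int[mu]_x (f1 x)%:E + c2%:E * \int[mu]_x (f2 x)%:E)%E.
Proof.
move=> m1 m2 mg p1 p2 pg c1p c2p h.
have -> : (c1%:E * \int[mu]_x (f1 x)%:E + c2%:E * \int[mu]_x (f2 x)%:E
   = \int[mu]_x ((c1 * f1 x + c2 * f2 x)%:E))%E.
  under [RHS]eq_integral => x _ do rewrite EFinD !EFinM.
  rewrite ge0_integralD //.
  - by rewrite !ge0_integralZl_EFin //; [move=> x _; rewrite lee_fin|exact: mfE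
       |move=> x _; rewrite lee_fin|exact: mfE].
  - by move=> x _; rewrite -EFinM lee_fin mulr_ge0.
  - by apply: emeasurable_funM; [exact: measurable_cst| exact: mfE].
  - by move=> x _; rewrite -EFinM lee_fin mulr_ge0.
  - by apply: emeasurable_funM; [exact: measurable_cst| exact: mfE].
apply: ge0_le_integral => //.
- by move=> x _; rewrite lee_fin.
- exact: mfE.
- by apply: mfE; apply: mfD; apply: mfM => //; exact: mfC.
- by move=> x _; rewrite lee_fin.
Qed.

Lemma fin_lin (f1 f2 g : T -> R) (c1 c2 : R) :
  mf f1 -> mf f2 -> mf g ->
  (forall x, 0 <= f1 x) -> (forall x, 0 <= f2 x) -> (forall x, 0 <= g x) ->
  0 <= c1 -> 0 <= c2 -> (forall x, g x <= c1 * f1 x + c2 * f2 x) ->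
  (\int[mu]_x (f1 x)%:E = 1)%E -> (\int[mu]_x (f2 x)%:E = 1)%E ->
  exists r, (\int[mu]_x (g x)%:E = r%:E)%E.
Proof.
move=> m1 m2 mg p1 p2 pg c1p c2p h i1 i2.
have := int_lin f1 f2 g c1 c2 m1 m2 mg p1 p2 pg c1p c2p h.
rewrite i1 i2.
have : (0 <= \int[mu]_x (g x)%:E)%E by apply: integral_ge0 => x _; rewrite lee_fin.
case: (\int[mu]_x (g x)%:E)%E => [r| |] // _ _; by exists r.
Qed.

Lemma dist_bound (f g y1 y2 : T -> R) (w1 w2 : R) :
  mf f -> mf g -> mf y1 -> mf y2 ->
  (forall x, 0 <= f x) -> (forall x, 0 <= g x) ->
  (forall x, 0 <= y1 x) -> (forall x, 0 <= y2 x) ->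
  (forall x, y1 x + y2 x = 1) -> 0 <= w1 -> 0 <= w2 ->
  (w1%:E * \int[mu]_x (f x * y1 x)%:E + w2%:E * \int[mu]_x (g x * y2 x)%:E
    + \int[mu]_x (Order.min (w1 * f x) (w2 * g x))%:E
   <= w1%:E * \int[mu]_x (f x)%:E + w2%:E * \int[mu]_x (g x)%:E)%E.
Proof.
move=> mf_ mg my1 my2 pf pg py1 py2 hy w1p w2p.
have mfg1 : mf (fun x => f x * y1 x) by exact: mfM.
have mfg2 : mf (fun x => g x * y2 x) by exact: mfM.
rewrite -!ge0_integralZl_EFin //; try (by move=> x _; rewrite lee_fin ?mulr_ge0);
  try exact: mfE.
have mz : forall c (h : T -> R), mf h ->
    measurable_fun setT (fun x => (c%:E * (h x)%:E)%E).
  by move=> c h mh; apply: emeasurable_funM; [exact: measurable_cst| exact: mfE].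
rewrite -!ge0_integralD //; try (by move=> x _; rewrite -?EFinM lee_fin ?mulr_ge0);
  try (by apply: mz); try (by apply: mfE; apply: mfmin; apply: mfM => //; exact: mfC).
- apply: ge0_le_integral => //.
  + move=> x _; rewrite -!EFinM -!EFinD lee_fin.
    by apply: addr_ge0; [apply: addr_ge0; apply: mulr_ge0 => //; apply: mulr_ge0|
      rewrite le_min; apply/andP; split; apply: mulr_ge0].
  + apply: emeasurable_funD; [apply: emeasurable_funD; exact: mz|].
    by apply: mfE; apply: mfmin; apply: mfM => //; exact: mfC.
  + by apply: emeasurable_funD; exact: mz.
  + move=> x _; rewrite -!EFinM -!EFinD lee_fin.
    have := hy x; have := pf x; have := pg x; have := py1 x; have := py2 x.
    case: (leP (w1 * f x) (w2 * g x)) => hm.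
      have := ler_wpM2r (py1 x) hm.
      move=> *. nra.
    
    have := ler_wpM2r (py2 x) (ltW hm).
    move=> *. nra.
- move=> x _; rewrite -!EFinM -!EFinD lee_fin.
  by apply: addr_ge0; apply: mulr_ge0 => //; apply: mulr_ge0.
- by apply: emeasurable_funD; exact: mz.
- move=> x _; rewrite lee_fin le_min; apply/andP; split; apply: mulr_ge0 => //.
Qed.

End Helpers.
Arguments int_lin {R d T mu f1 f2 g c1 c2}.
Arguments fin_lin {R d T mu f1 f2 g c1 c2}.
Arguments dist_bound {R d T mu f g y1 y2 w1 w2}.

Lemma povm2 (R : realType) (n : nat) : exists M : 'I_2 -> 'M[R[i]]_n, is_POVM M.
Proof.
exists (fun i => if i == o2_1 then 1%:M else 0); split.
- move=> i v; case: ifP => _; last by rewrite mulmx0 mul0mx mxE.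
  rewrite mulmx1 mxE; apply: sumr_ge0 => j _; rewrite /adj !mxE mulrC.
  exact: mul_conjC_ge0.
- rewrite big_ord_recl big_ord1.
  have -> : (ord0 : 'I_2) == o2_1 by apply/eqP/val_inj; rewrite /= inordK.
  have -> : (lift ord0 ord0 : 'I_2) == o2_1 = false.
    by apply/negbTE/eqP => /(congr1 val); rewrite /= inordK.
  by rewrite addr0.
Qed.

Lemma sum2 (R : realType) (F : 'I_2 -> R) : \sum_(i < 2) F i = F o2_1 + F o2_2.
Proof.
rewrite big_ord_recl big_ord1; congr (F _ + F _); apply/val_inj.
  by rewrite /= inordK.
by rewrite /= inordK.
Qed.

Ltac mfs := repeat first [exact: mfC | assumption | apply: mfmin | apply: mfM | apply: mfD].

Ltac mins := repeat match goal with |- context [Order.min ?u ?v] =>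
   lazymatch u with context [Order.min _ _] => fail | _ =>
   lazymatch v with context [Order.min _ _] => fail | _ =>
     case: (leP u v) => ? end end end.

Theorem theorem2 (R : realType) (n : nat) (psi1 psi2 : 'cV[R[i]]_n) (a b : R)
  (hpsi1 : unit_vector psi1) (hpsi2 : unit_vector psi2)
  (ha : 0 <= a <= 1) (hb : 0 <= b <= 1)
  (d : measure_display) (T : measurableType d) (mu : {measure set T -> \bar R})
  (m1 m2 mr : T -> R)
  (xi : forall k, ('I_k -> 'M[R[i]]_n) -> 'I_k -> T -> R)
  (hmodel : is_ontological_model mu psi1 psi2 m1 m2 mr xi) :
  (omegaL mu m1 m2 a b
     <= (omegaQ psi1 psi2 a b - BQ psi1 psi2 a b)%:E)%E.
Proof.
case: hmodel => [[[mm1 [p1 i1]] [mm2 [p2 i2]] [mmr [pr ir]]] hxi hprob hmr].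
case/andP: ha => a0 a1; case/andP: hb => b0 b1.
have fl : forall g : T -> R, measurable_fun setT g -> (forall x, 0 <= g x) ->
    (forall x, g x <= 2 * m1 x + 2 * m2 x) ->
    exists r, (\int[mu]_x (g x)%:E = r%:E)%E.
  move=> g mg pg hg; apply: (fin_lin (c1:=2) (c2:=2) mm1 mm2 mg p1 p2 pg) => //.
have [A hA] : exists r,
    (\int[mu]_x (Order.min ((1 + b) * m1 x) ((1 + b) * m2 x))%:E = r%:E)%E.
  apply: fl; first by mfs.
    by move=> x; have := p1 x; have := p2 x; mins; nra.
  by move=> x; have := p1 x; have := p2 x; mins; nra.
have [B hB] : exists r,
    (\int[mu]_x (Order.min ((1 + b) * m1 x) ((a + b) * (m1 x + m2 x)))%:E = r%:E)%E.
  apply: fl; first by mfs.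
    by move=> x; have := p1 x; have := p2 x; mins; nra.
  by move=> x; have := p1 x; have := p2 x; mins; nra.
have [C hC] : exists r,
    (\int[mu]_x (Order.min ((1 + b) * m2 x) ((a + b) * (m1 x + m2 x)))%:E = r%:E)%E.
  apply: fl; first by mfs.
    by move=> x; have := p1 x; have := p2 x; mins; nra.
  by move=> x; have := p1 x; have := p2 x; mins; nra.
have [Z hZ] : exists r,
    (\int[mu]_x (Order.min (Order.min ((1 + b) * m1 x) ((1 + b) * m2 x))
                   ((a + b) * (m1 x + m2 x)))%:E = r%:E)%E.
  apply: fl; first by mfs.
    by move=> x; have := p1 x; have := p2 x; mins; nra.
  by move=> x; have := p1 x; have := p2 x; mins; nra.
have [X hX] : exists r,
    (\int[mu]_x (Order.min (2%:R^-1 * m1 x) (2%:R^-1 * m2 x))%:E = r%:E)%E.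
  apply: fl; first by mfs.
    by move=> x; have := p1 x; have := p2 x; mins; nra.
  by move=> x; have := p1 x; have := p2 x; mins; nra.
have [W1 hW1] : exists r,
    (\int[mu]_x (Order.min ((1 + b) / 2 * m1 x) ((a + b) * mr x))%:E = r%:E)%E.
  apply: fl; first by mfs.
    by move=> x; rewrite hmr; have := p1 x; have := p2 x; mins; nra.
  by move=> x; rewrite hmr; have := p1 x; have := p2 x; mins; nra.
have [W2 hW2] : exists r,
    (\int[mu]_x (Order.min ((1 + b) / 2 * m2 x) ((a + b) * mr x))%:E = r%:E)%E.
  apply: fl; first by mfs.
    by move=> x; rewrite hmr; have := p1 x; have := p2 x; mins; nra.
  by move=> x; rewrite hmr; have := p1 x; have := p2 x; mins; nra.
have R1 : (A%:E <= 1%:E * Z%:E + (2 - 2 * a)%:E * X%:E)%E.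
  { rewrite -hA -hZ -hX; apply: int_lin; try by mfs.
  all: try (by move=> x; have := p1 x; have := p2 x; mins; nra).
  all: try lra. }
have R2 : (B%:E <= 2%:E * W1%:E + 0%:E * 1%:E)%E.
  { rewrite -hB -hW1 -i1; apply: int_lin; try by mfs.
  all: try (by move=> x; rewrite ?hmr; have := p1 x; have := p2 x; mins; nra).
  all: try lra. }
have R3 : (C%:E <= 2%:E * W2%:E + 0%:E * 1%:E)%E.
  { rewrite -hC -hW2 -i1; apply: int_lin; try by mfs.
  all: try (by move=> x; rewrite ?hmr; have := p1 x; have := p2 x; mins; nra).
  all: try lra. }
move: R1 R2 R3; rewrite -!EFinM -!EFinD !lee_fin => R1 R2 R3.
have [M0 hM0] := povm2 R n.
have hsum : forall M : 'I_2 -> 'M[R[i]]_n, is_POVM M ->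
    forall l, xi 2 M o2_1 l + xi 2 M o2_2 l = 1.
  by move=> M hM l; have [_ [_ hs]] := hxi 2 M hM; rewrite -(hs l) sum2.
have hD : DQ psi1 psi2 <= 1 - X.
  rewrite /DQ /DQw; apply: ge_sup.
    by eexists; exists M0; split; [exact: hM0| reflexivity].
  move=> y [M [hM ->]].
  have [hm [hn _]] := hxi 2 M hM.
  have [e11 _ _] := hprob 2 M hM o2_1.
  have [_ e22 _] := hprob 2 M hM o2_2.
  have w0 : (0:R) <= 2%:R^-1 by rewrite invr_ge0 ler0n.
  have := dist_bound (mu:=mu) mm1 mm2 (hm o2_1) (hm o2_2) p1 p2 (hn o2_1) (hn o2_2)
     (hsum M hM) w0 w0.
  rewrite -e11 -e22 hX i1 i2 -!EFinM -!EFinD lee_fin.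
  lra.
have hD1 : DQw (Defs.proj psi1) ((1 + b) / 2) (mixture psi1 psi2) (a + b)
     <= (1 + b) / 2 + (a + b) - W1.
  apply: ge_sup.
    by eexists; exists M0; split; [exact: hM0| reflexivity].
  move=> y [M [hM ->]].
  have [hm [hn _]] := hxi 2 M hM.
  have [e11 _ _] := hprob 2 M hM o2_1.
  have [_ _ e22] := hprob 2 M hM o2_2.
  have w1 : (0:R) <= (1 + b) / 2 by lra.
  have w2 : (0:R) <= a + b by lra.
  have := dist_bound (mu:=mu) mm1 mmr (hm o2_1) (hm o2_2) p1 pr (hn o2_1) (hn o2_2)
     (hsum M hM) w1 w2.
  rewrite -e11 -e22 hW1 i1 ir -!EFinM -!EFinD lee_fin.
  lra.
have hD2 : DQw (Defs.proj psi2) ((1 + b) / 2) (mixture psi1 psi2) (a + b)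
     <= (1 + b) / 2 + (a + b) - W2.
  apply: ge_sup.
    by eexists; exists M0; split; [exact: hM0| reflexivity].
  move=> y [M [hM ->]].
  have [hm [hn _]] := hxi 2 M hM.
  have [_ e11 _] := hprob 2 M hM o2_1.
  have [_ _ e22] := hprob 2 M hM o2_2.
  have w1 : (0:R) <= (1 + b) / 2 by lra.
  have w2 : (0:R) <= a + b by lra.
  have := dist_bound (mu:=mu) mm2 mmr (hm o2_1) (hm o2_2) p2 pr (hn o2_1) (hn o2_2)
     (hsum M hM) w1 w2.
  rewrite -e11 -e22 hW2 i2 ir -!EFinM -!EFinD lee_fin.
  lra.
rewrite /omegaL; cbv beta zeta.
rewrite hA hB hC hZ.
have -> : (A%:E + B%:E + C%:E - (2 * (a + b))%:E - Z%:E = (A + B + C - 2 * (a + b) - Z)%:E)%E by [].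
rewrite lee_fin.
rewrite /omegaQ /BQ; cbv zeta.
move: hD hD1 hD2; rewrite /DQ.
set D0 := DQw _ _ _ _.
set D1 := DQw _ _ _ _.
set D2 := DQw _ _ _ _.
move=> hD hD1 hD2.
have := ler_wpM2l (_ : 0 <= 1 - a) hD.
nra.
Qed.
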